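(* Let $a<b$ be real, $\phi:\mathbb{R}^n\to\mathbb{R}$ Schur-concave on $[a,b]^n$, $\alpha\in\mathbb{R}$, and $S^\alpha=\{(x,t)\mid\phi(x)\le t\le\alpha,\ x\in[a,b]^n\}$. For $x\in[a,b]^n$ let $S(x)=\sum_{i=1}^n(x_i-a)$. For $s\in[0,n(b-a)]$ let $i^s=\max\{i\in\{0,\dots,n\}\mid i(b-a)<s\}$ (with $i^0=0$) and define $u^s\in\mathbb{R}^n$ by $u^s_i=b$ for $i\le i^s$, $u^s_{i^s+1}=a+s-(b-a)i^s$, and $u^s_i=a$ for $i>i^s+1$. Let $\Theta^\alpha=\{(x,t)\mid\phi(u^{S(x)})\le t\le\alpha,\ x\in[a,b]^n\}$. Then $\mathrm{conv}(S^\alpha)=\mathrm{conv}(\Theta^\alpha)$. Moreover, if $\phi$ is component-wise convex on $[a,b]^n$, then $\Theta^\alpha$ is convex.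
   Context: $\phi$ is Schur-concave on $C$ if for all $x,y\in C$, $x\ge_m y$ implies $\phi(x)\le\phi(y)$, where $x\ge_m y$ means $\sum_{i=1}^j x_{[i]}\ge\sum_{i=1}^j y_{[i]}$ for $j<n$ with equality for $j=n$ ($x_{[i]}$ the $i$-th largest entry). $\phi$ is component-wise convex if it is convex in each single coordinate when all other coordinates are fixed. *)

(* Defs.v *)
(* reals are an arbitrary realFieldType (purely order-algebraic statement). *)
From HB Require Import structures.
From mathcomp Require Import all_boot all_order all_algebra.
Set Implicit Arguments. Unset Strict Implicit. Unset Printing Implicit Defensive.
Import Order.TTheory GRing.Theory Num.Theory.
Local Open Scope ring_scope.

Section Defs.
Variables (R : realFieldType) (n : nat).

Definition vec := 'I_n -> R.

Definition in_box (a b : R) (x : vec) : Prop := forall i, a <= x i <= b.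

(* x_[i] : entries sorted in nonincreasing order (0-indexed) *)
Definition dsorted (x : vec) : seq R := sort (fun u v => v <= u) [seq x i | i <- enum 'I_n].
Definition xdec (x : vec) (i : nat) : R := nth 0 (dsorted x) i.

Definition majorizes (x y : vec) : Prop :=
  (forall j, (j < n)%N -> \sum_(i < j) xdec y i <= \sum_(i < j) xdec x i)
  /\ \sum_(i < n) xdec x i = \sum_(i < n) xdec y i.

Definition schur_concave_on (C : vec -> Prop) (phi : vec -> R) : Prop :=
  forall x y, C x -> C y -> majorizes x y -> phi x <= phi y.

Definition setc (x : vec) (i : 'I_n) (v : R) : vec := fun j => if j == i then v else x j.

Definition componentwise_convex_on (a b : R) (phi : vec -> R) : Prop :=
  forall x i s1 s2 l, in_box a b x -> a <= s1 <= b -> a <= s2 <= b -> 0 <= l <= 1 ->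
    phi (setc x i (l * s1 + (1 - l) * s2)) <= l * phi (setc x i s1) + (1 - l) * phi (setc x i s2).

Definition conv (A : vec * R -> Prop) (z : vec * R) : Prop :=
  exists m (l : 'I_m -> R) (p : 'I_m -> vec * R),
    (forall k, 0 <= l k) /\ \sum_(k < m) l k = 1 /\ (forall k, A (p k)) /\
    (forall i, z.1 i = \sum_(k < m) l k * (p k).1 i) /\ z.2 = \sum_(k < m) l k * (p k).2.

Definition convex_set (A : vec * R -> Prop) : Prop :=
  forall p q l, A p -> A q -> 0 <= l <= 1 ->
    A ((fun i => l * p.1 i + (1 - l) * q.1 i), l * p.2 + (1 - l) * q.2).

Definition Ssum (a : R) (x : vec) : R := \sum_(i < n) (x i - a).

(* i^s = max { i in {0..n} | i(b-a) < s }, with max of empty set = 0 *)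
Definition istar (a b s : R) : nat := \max_(i < n.+1 | ((i : nat)%:R * (b - a) < s)%R) (i : nat).

(* u^s, 0-indexed: positions j < i^s get b, position i^s gets a+s-(b-a)i^s, rest a *)
Definition ustar (a b s : R) : vec := fun j =>
  if (j < istar a b s)%N then b
  else if (j : nat) == istar a b s then a + s - (b - a) * (istar a b s)%:R
  else a.

Definition Salpha (a b : R) (phi : vec -> R) (alpha : R) (z : vec * R) : Prop :=
  in_box a b z.1 /\ phi z.1 <= z.2 <= alpha.

Definition Theta (a b : R) (phi : vec -> R) (alpha : R) (z : vec * R) : Prop :=
  in_box a b z.1 /\ phi (ustar a b (Ssum a z.1)) <= z.2 <= alpha.

End Defs.

(* Main.v *)
Require Import Defs.
From HB Require Import structures.
From mathcomp Require Import all_boot all_order all_algebra.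
From mathcomp Require Import ring lra zify.
From Stdlib Require Import FunctionalExtensionality.
Set Implicit Arguments. Unset Strict Implicit. Unset Printing Implicit Defensive.
Import Order.TTheory GRing.Theory Num.Theory.
Local Open Scope ring_scope.



Section Sorting.
Variables (R : realFieldType) (n : nat) (a b : R).
Hypothesis hab : a < b.

Definition fr (v : R) : bool := (a < v) && (v < b).
Definition fc (x : vec R n) : nat := #|[pred i | fr (x i)]|.
Definition rge : rel R := fun u v => v <= u.
Definition sq (x : vec R n) : seq R := [seq x i | i <- enum 'I_n].

Lemma rge_total : total rge.
Proof. by move=> u v; rewrite /rge orbC le_total. Qed.
Lemma rge_trans : transitive rge.
Proof. by move=> u v w h1 h2; rewrite /rge (le_trans h2 h1). Qed.
Lemma rge_refl : reflexive rge.
Proof. by move=> u; rewrite /rge. Qed.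

Lemma size_ds (x : vec R n) : size (dsorted x) = n.
Proof. by rewrite /dsorted size_sort size_map size_enum_ord. Qed.

Lemma perm_ds (x : vec R n) : perm_eq (dsorted x) (sq x).
Proof. by rewrite /dsorted perm_sort. Qed.

Lemma sorted_ds (x : vec R n) : sorted rge (dsorted x).
Proof. exact: (sort_sorted rge_total). Qed.

Lemma ds_nth_le (x : vec R n) i j : (i <= j < n)%N -> xdec x j <= xdec x i.
Proof.
move=> /andP[hij hj]; rewrite /xdec.
have := @sorted_leq_nth _ rge rge_trans rge_refl 0 _ (sorted_ds x) i j.
rewrite !inE size_ds; apply => //; lia.
Qed.

Lemma ds_mem (x : vec R n) i : (i < n)%N -> exists j, xdec x i = x j.
Proof.
move=> hi; have : xdec x i \in dsorted x by rewrite mem_nth // size_ds.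
rewrite (perm_mem (perm_ds x)) => /mapP [j _ ->]; by exists j.
Qed.

Lemma ds_box (x : vec R n) i : in_box a b x -> (i < n)%N -> a <= xdec x i <= b.
Proof. by move=> hx hi; have [j ->] := ds_mem x hi; apply: hx. Qed.

Lemma fc_count (x : vec R n) : count fr (dsorted x) = fc x.
Proof.
rewrite (permP (perm_ds x)) /sq count_map -sum1_count big_enum_cond /=.
by rewrite sum1_card.
Qed.

Lemma tot_ds (x : vec R n) : \sum_(i < n) xdec x i = \sum_(i < n) x i.
Proof.
rewrite -(big_mkord xpredT (fun i => xdec x i)) /xdec.
have := big_nth 0 (r:=dsorted x) xpredT id; rewrite size_ds /= => <-.
rewrite (perm_big _ (perm_ds x)).
by rewrite /sq big_map big_enum.
Qed.


Definition pre (x : vec R n) (j : nat) : R := \sum_(i < j) xdec x i.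
Definition tot (x : vec R n) : R := \sum_(i < n) x i.

Lemma count2 (d : seq R) i1 i2 : (i1 < i2)%N -> (i2 < size d)%N ->
  fr (nth 0 d i1) -> fr (nth 0 d i2) -> (1 < count fr d)%N.
Proof.
move=> h12 h2 f1 f2.
rewrite -(cat_take_drop i2 d) count_cat (drop_nth 0 h2) /= f2.
have : (0 < count fr (take i2 d))%N.
  rewrite -has_count; apply/hasP; exists (nth 0 d i1) => //.
  rewrite -(nth_take 0 h12); apply: mem_nth; rewrite size_take h2 //.
lia.
Qed.

Lemma pre_le1 (x : vec R n) j : in_box a b x -> (j <= n)%N -> pre x j <= j%:R * b.
Proof.
move=> hx hj; rewrite /pre mulr_natl.
have -> : b *+ j = \sum_(i < j) b by rewrite sumr_const card_ord.
apply: ler_sum => i _; have /andP[] := ds_box hx (leq_trans (ltn_ord i) hj) => //.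
Qed.

Lemma pre_split (x : vec R n) j : (j <= n)%N ->
  tot x = pre x j + \sum_(j <= i < n) xdec x i.
Proof.
move=> hj; rewrite /tot -tot_ds /pre -!(big_mkord xpredT (fun i => xdec x i)).
by rewrite (@big_cat_nat _ _ _ j 0 n).
Qed.

Lemma suf_ge (x : vec R n) j : in_box a b x -> (j <= n)%N ->
  (n - j)%:R * a <= \sum_(j <= i < n) xdec x i.
Proof.
move=> hx hj; rewrite mulr_natl -sumr_const_nat.
rewrite big_nat_cond [X in _ <= X]big_nat_cond.
apply: ler_sum => i /andP[/andP[_ hi] _]; by have /andP[] := ds_box hx hi.
Qed.

Lemma pre_le2 (x : vec R n) j : in_box a b x -> (j <= n)%N ->
  pre x j <= tot x - (n - j)%:R * a.
Proof. move=> hx hj; have := suf_ge hx hj; rewrite (pre_split x hj); lra. Qed.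

Lemma dichot (x : vec R n) j : in_box a b x -> (fc x <= 1)%N -> (j <= n)%N ->
  (forall i, (i < j)%N -> xdec x i = b) \/ (forall i, (j <= i < n)%N -> xdec x i = a).
Proof.
move=> hx hfc hj; case: j hj => [|j] hj; first by left.
have [hb|hb] := eqVneq (xdec x j) b.
  left => i hi; apply/eqP; rewrite eq_le; have /andP[_ ->] := ds_box hx (leq_trans hi hj).
  by rewrite -hb ds_nth_le //; apply/andP; split; lia.
right => i /andP[hi1 hi2]; apply/eqP; rewrite eq_le.
have /andP[hai hib] := ds_box hx hi2; rewrite hai andbT.
rewrite leNgt; apply/negP => hlt.
have hji : xdec x i <= xdec x j by apply: ds_nth_le; apply/andP; split; lia.
have /andP[haj hbj] := ds_box hx (leq_trans (ltnSn j) hj).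
have : (1 < count fr (dsorted x))%N.
  have hji' : (j < i)%N by lia.
  have hsz : (i < size (dsorted x))%N by rewrite size_ds.
  apply: (count2 hji' hsz).
  - rewrite /fr -/(xdec x j) (lt_le_trans hlt hji) /=; by rewrite lt_neqAle hb hbj.
  - by rewrite /fr -/(xdec x i) hlt (le_lt_trans hji) // lt_neqAle hb hbj.
rewrite fc_count; lia.
Qed.

Lemma pre_eq (x : vec R n) j : in_box a b x -> (fc x <= 1)%N -> (j <= n)%N ->
  pre x j = j%:R * b \/ pre x j = tot x - (n - j)%:R * a.
Proof.
move=> hx hfc hj; case: (dichot hx hfc hj) => h.
  left; rewrite /pre mulr_natl.
  have -> : b *+ j = \sum_(i < j) b by rewrite sumr_const card_ord.
  by apply: eq_bigr => i _; rewrite h.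
right; rewrite (pre_split x hj) mulr_natl -sumr_const_nat.
have -> : \sum_(j <= i < n) xdec x i = \sum_(j <= i < n) a.
  by rewrite big_nat_cond [RHS]big_nat_cond; apply: eq_bigr => i /andP[hi _]; rewrite h.
by rewrite addrK.
Qed.

Lemma pre_n (x : vec R n) : pre x n = tot x.
Proof. by rewrite /pre tot_ds. Qed.

Lemma maj_lem (x y : vec R n) : in_box a b x -> in_box a b y -> (fc y <= 1)%N ->
  tot x = tot y -> majorizes y x.
Proof.
move=> hx hy hfc ht; split; last by rewrite -/(pre y n) -/(pre x n) !pre_n.
move=> j hj; rewrite -/(pre y j) -/(pre x j).
have h1 := pre_le1 hx (ltnW hj); have h2 := pre_le2 hx (ltnW hj).
case: (pre_eq hy hfc (ltnW hj)) => ->; lra.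
Qed.

End Sorting.



Section Pieces.
Variables (R : realFieldType) (n : nat) (a b : R).
Hypothesis hab : a < b.
Let w := b - a.
Let hw : 0 < w. Proof. by rewrite /w subr_gt0. Qed.

Definition wvec (k : nat) (s : R) : vec R n := fun j =>
  if (j < k)%N then b
  else if (j : nat) == k then a + s - (b - a) * k%:R
  else a.

Lemma ustarE s : ustar a b s = wvec (istar n a b s) s.
Proof. by []. Qed.

Lemma natw_le (i k : nat) : (i <= k)%N -> i%:R * w <= k%:R * w.
Proof. by move=> h; rewrite ler_wpM2r ?ler_nat // ltW. Qed.

Lemma istar_eq k s : (k < n)%N -> k%:R * w < s -> s <= k.+1%:R * w -> istar n a b s = k.
Proof.
move=> hk h1 h2; apply/eqP; rewrite eqn_leq; apply/andP; split.
  apply/bigmax_leqP => i /= hi; rewrite leqNgt; apply/negP => hki.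
  have := natw_le (hki : (k.+1 <= i)%N); rewrite -/w in hi; lra.
have hk1 : (k < n.+1)%N by lia.
exact: (@leq_bigmax_cond _ (fun i : 'I_n.+1 => (i%:R * (b - a) < s)) (fun i => (i : nat)) (Ordinal hk1)).
Qed.

Lemma istar0 s : s <= 0 -> istar n a b s = 0%N.
Proof.
move=> hs; apply/eqP; rewrite -leqn0; apply/bigmax_leqP => i /= hi.
have := natw_le (leq0n i); rewrite mul0r -/w in hi *; lra.
Qed.

Lemma ustar_piece k s : (k < n)%N -> k%:R * w <= s <= k.+1%:R * w -> ustar a b s = wvec k s.
Proof.
move=> hk /andP[h1 h2]; rewrite ustarE.
have [hlt|heq] := ltrP (k%:R * w) s.
  by rewrite (istar_eq hk hlt h2).
have hs : s = k%:R * w by apply/eqP; rewrite eq_le heq h1.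
case: k hk h1 h2 heq hs => [|k] hk h1 h2 heq hs.
  by rewrite istar0 // hs mul0r.
have hk' : (k < n)%N by lia.
rewrite (istar_eq hk'); last 2 first.
- rewrite hs; have := natw_le (leqnSn k); have : k%:R * w < k.+1%:R * w.
    by rewrite ltr_pM2r // ltr_nat.
  lra.
- by rewrite hs.
apply: functional_extensionality => j; rewrite /wvec.
have -> : (j < k.+1)%N = (j < k)%N || ((j : nat) == k) by rewrite ltnS leq_eqVlt orbC.
case: ltnP => hjk /=; first by [].
case: eqVneq => hjk2 /=.
  by rewrite hs /w -natr1; ring.
by case: (_ == k.+1) => //; rewrite hs /w; ring.
Qed.


Lemma wvec_box k s : k%:R * w <= s <= k.+1%:R * w -> in_box a b (wvec k s).
Proof.
move=> /andP[h1 h2] j; rewrite /wvec.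
case: ltnP => _; first by rewrite lexx (ltW hab).
case: eqVneq => _; last by rewrite lexx (ltW hab).
move: h1 h2; rewrite -natr1 /w => h1 h2; apply/andP; split; lra.
Qed.

Lemma wvec_S k s : (k < n)%N -> Ssum a (wvec k s) = s.
Proof.
move=> hk; rewrite /Ssum /wvec.
rewrite -(big_mkord xpredT (fun j => (if (j < k)%N then b else if j == k then a + s - (b - a) * k%:R else a) - a)).
rewrite (@big_cat_nat _ _ _ k 0 n) //=; last by lia.
rewrite (big_ltn hk) ltnn eqxx.
have -> : \sum_(0 <= i < k) ((if (i < k)%N then b else if i == k then a + s - (b - a) * k%:R else a) - a)
   = \sum_(0 <= i < k) (b - a).
  by rewrite big_nat_cond [RHS]big_nat_cond; apply: eq_bigr => i /andP[/andP[_ ->] _].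
rewrite sumr_const_nat subn0.
rewrite big_nat_cond big1; last first.
  move=> i /andP[/andP[hi _] _].
  have -> : (i < k)%N = false by lia.
  have -> : (i == k) = false by lia.
  by rewrite subrr.
rewrite -mulr_natl; ring.
Qed.

Lemma wvec_fc k s : (k < n)%N -> (fc a b (wvec k s) <= 1)%N.
Proof.
move=> hk; rewrite /fc.
apply: leq_trans (subset_leq_card (B := pred1 (Ordinal hk)) _) _; last by rewrite card1.
apply/subsetP => j; rewrite !inE /fr /wvec.
case: ltnP => _; first by rewrite ltxx andbF.
case: eqVneq => [hj|_]; last by rewrite ltxx.
by move=> _; apply/eqP; apply: val_inj.
Qed.

Lemma exists_piece s : (0 < n)%N -> 0 <= s -> s <= n%:R * w ->
  exists k, (k < n)%N /\ k%:R * w <= s <= k.+1%:R * w.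
Proof.
move=> hn hs0; elim: n hn => [//|m IH] _ hs.
case: m IH hs => [|m] IH hs.
  by exists 0%N; rewrite mul0r hs0 hs.
have [h|h] := lerP s (m.+1%:R * w).
  have [k [hk hks]] := IH isT h; exists k; split => //; lia.
by exists m.+1; rewrite (ltW h) hs.
Qed.

Lemma u_props s : 0 <= s <= n%:R * w ->
  [/\ in_box a b (ustar a b s : vec R n), Ssum a (ustar a b s : vec R n) = s
    & (fc a b (ustar a b s : vec R n) <= 1)%N].
Proof.
move=> /andP[h1 h2].
have [hn0|hn] := eqVneq n 0%N.
  have hs : s = 0 by move: h2; rewrite hn0 mul0r => h2; apply/eqP; rewrite eq_le h1 h2.
  split.
  - by move=> [i hi]; exfalso; lia.
  - rewrite hs /Ssum big1 // => -[i hi]; exfalso; lia.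
  - apply: leq_trans (max_card _) _; rewrite card_ord; lia.
have hn' : (0 < n)%N by lia.
have [k [hk hks]] := exists_piece hn' h1 h2.
rewrite (ustar_piece hk hks); split.
- exact: wvec_box.
- exact: wvec_S.
- exact: wvec_fc.
Qed.

Lemma S_range (x : vec R n) : in_box a b x -> 0 <= Ssum a x <= n%:R * w.
Proof.
move=> hx; apply/andP; split.
  by apply: sumr_ge0 => i _; have /andP[h _] := hx i; rewrite subr_ge0.
rewrite mulr_natl; have -> : w *+ n = \sum_(i < n) w by rewrite sumr_const card_ord.
rewrite /Ssum; apply: ler_sum => i _.
by have /andP[_ h] := hx i; rewrite /w lerD2r.
Qed.

Lemma tot_S (x : vec R n) : Ssum a x = tot x - n%:R * a.
Proof. by rewrite /Ssum /tot sumrB sumr_const card_ord mulr_natl. Qed.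

Variable phi : vec R n -> R.
Hypothesis hphi : schur_concave_on (in_box a b) phi.

Lemma g_le (x : vec R n) : in_box a b x -> phi (ustar a b (Ssum a x)) <= phi x.
Proof.
move=> hx; have [hu hS hfc] := u_props (S_range hx).
apply: hphi => //; apply: (@maj_lem R n a b) => //.
by move: hS; rewrite !tot_S => hS; lra.
Qed.

Lemma g_ge (x : vec R n) : in_box a b x -> (fc a b x <= 1)%N ->
  phi x <= phi (ustar a b (Ssum a x)).
Proof.
move=> hx hfcx; have [hu hS hfc] := u_props (S_range hx).
apply: hphi => //; apply: (@maj_lem R n a b) => //.
by move: hS; rewrite !tot_S => hS; lra.
Qed.

End Pieces.



Section Conv.
Variables (R : realFieldType) (n : nat).
Implicit Types (A B K : vec R n * R -> Prop).

Lemma conv_sub A z : A z -> conv A z.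
Proof.
move=> hz; exists 1%N, (fun _ => 1), (fun _ => z); split => //.
split; first by rewrite big_ord1.
split => //; split; last by rewrite big_ord1 mul1r.
by move=> i; rewrite big_ord1 mul1r.
Qed.

Lemma conv_mono A B z : (forall y, A y -> B y) -> conv A z -> conv B z.
Proof.
move=> hAB [m [l [p [h1 [h2 [h3 h4]]]]]]; exists m, l, p; split => //; split => //.
by split => // k; apply: hAB.
Qed.

Lemma split_l m1 m2 (k : 'I_m1) : split (lshift m2 k) = inl k.
Proof. exact: (unsplitK (inl k)). Qed.
Lemma split_r m1 m2 (k : 'I_m2) : split (rshift m1 k) = inr k.
Proof. exact: (unsplitK (inr k)). Qed.

Lemma conv_convex A : convex_set (conv A).
Proof.
move=> p q lam [m1 [l1 [p1 [h11 [h12 [h13 [h14 h15]]]]]]]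
  [m2 [l2 [p2 [h21 [h22 [h23 [h24 h25]]]]]]] /andP[hl0 hl1].
pose L (i : 'I_(m1 + m2)) := match split i with inl k => lam * l1 k | inr k => (1 - lam) * l2 k end.
pose P (i : 'I_(m1 + m2)) := match split i with inl k => p1 k | inr k => p2 k end.
exists (m1 + m2)%N, L, P; split.
  move=> i; rewrite /L; case: (split i) => k; apply: mulr_ge0 => //; lra.
split.
  rewrite big_split_ord /L.
  under eq_bigr do rewrite split_l.
  under [X in _ + X = _]eq_bigr do rewrite split_r.
  by rewrite -!mulr_sumr h12 h22; ring.
split.
  by move=> i; rewrite /P; case: (split i) => k.
split.
  move=> i /=; rewrite big_split_ord /L /P.
  under eq_bigr do rewrite split_l.
  under [X in _ = _ + X]eq_bigr do rewrite split_r.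
  rewrite h14 h24 !mulr_sumr; congr (_ + _); apply: eq_bigr => k _; ring.
rewrite /= big_split_ord /L /P.
under eq_bigr do rewrite split_l.
under [X in _ = _ + X]eq_bigr do rewrite split_r.
rewrite h15 h25 !mulr_sumr; congr (_ + _); apply: eq_bigr => k _; ring.
Qed.

Lemma recr_split m (l v : 'I_m.+1 -> R) : 1 - l ord_max != 0 ->
  \sum_(k < m.+1) l k * v k = l ord_max * v ord_max +
    (1 - l ord_max) * \sum_(k < m) (l (widen_ord (leqnSn m) k) / (1 - l ord_max)) * v (widen_ord (leqnSn m) k).
Proof.
move=> hne; rewrite big_ord_recr /= mulr_sumr addrC; congr (_ + _).
by apply: eq_bigr => k _; field.
Qed.

Lemma convex_fin K : convex_set K -> forall m (l : 'I_m -> R) (p : 'I_m -> vec R n * R),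
  (forall k, 0 <= l k) -> \sum_(k < m) l k = 1 -> (forall k, K (p k)) ->
  K ((fun i => \sum_(k < m) l k * (p k).1 i), \sum_(k < m) l k * (p k).2).
Proof.
move=> hK; elim => [|m IH] l p hl hs hp.
  by move: hs; rewrite big_ord0 => /eqP; rewrite eq_sym oner_eq0.
pose l' (k : 'I_m) := l (widen_ord (leqnSn m) k).
pose p' (k : 'I_m) := p (widen_ord (leqnSn m) k).
have hs' : \sum_(k < m) l' k = 1 - l ord_max by move: hs; rewrite big_ord_recr /=; lra.
have hl'0 : 0 <= \sum_(k < m) l' k by apply: sumr_ge0 => k _; apply: hl.
have [h1|h1] := eqVneq (l ord_max) 1.
  have hz : forall k, l' k = 0.
    move=> k; apply: (psumr_eq0P (P := xpredT)) => //; first by move=> j _; apply: hl.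
    by rewrite hs' h1 subrr.
  suff -> : ((fun i => \sum_(k < m.+1) l k * (p k).1 i), \sum_(k < m.+1) l k * (p k).2)
    = ((p ord_max).1, (p ord_max).2) by rewrite -surjective_pairing.
  congr pair; last by rewrite big_ord_recr /= big1 ?h1 ?add0r ?mul1r // => k _; rewrite -/(l' k) hz mul0r.
  apply: functional_extensionality => i.
  by rewrite big_ord_recr /= big1 ?h1 ?add0r ?mul1r // => k _; rewrite -/(l' k) hz mul0r.
have hmu : 0 < 1 - l ord_max.
  have hne : 1 - l ord_max != 0 by rewrite subr_eq0 eq_sym.
  by rewrite lt_def hne -hs'.
have hA : forall k, 0 <= (fun k => l' k / (1 - l ord_max)) k.
  by move=> k; apply: divr_ge0 => //; [apply: hl | apply: ltW].
have hB : \sum_(k < m) (fun k => l' k / (1 - l ord_max)) k = 1.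
  by rewrite /= -mulr_suml hs' divff // gt_eqF.
have hin := IH _ p' hA hB (fun k => hp _).
have := hK (p ord_max) _ (l ord_max) (hp ord_max) hin.
have hl1 : 0 <= l ord_max <= 1 by rewrite hl /=; lra.
have hne : 1 - l ord_max != 0 by rewrite gt_eqF.
move=> /(_ hl1) H; apply: (eq_rect _ K H); rewrite /l' /p'.
congr pair; first apply: functional_extensionality => i.
  by rewrite (recr_split _ hne).
by rewrite (recr_split _ hne).
Qed.

Lemma conv_idem A B z : (forall y, A y -> conv B y) -> conv A z -> conv B z.
Proof.
move=> hAB [m [l [p [h1 [h2 [h3 [h4 h5]]]]]]].
have := convex_fin (@conv_convex B) h1 h2 (fun k => hAB _ (h3 k)).
suff -> : ((fun i => \sum_(k < m) l k * (p k).1 i), \sum_(k < m) l k * (p k).2) = z by [].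
rewrite [z]surjective_pairing; congr pair; last by rewrite h5.
by apply: functional_extensionality => i; rewrite h4.
Qed.

End Conv.



Section Part1.
Variables (R : realFieldType) (n : nat) (a b : R).
Hypothesis hab : a < b.
Variable phi : vec R n -> R.
Hypothesis hphi : schur_concave_on (in_box a b) phi.
Variable alpha : R.

Lemma Ssum_setc (x : vec R n) k v : Ssum a (setc x k v) = Ssum a x + (v - x k).
Proof.
rewrite /Ssum (bigD1 k) //= [in RHS](bigD1 k) //= /setc eqxx.
have -> : \sum_(i < n | i != k) ((if i == k then v else x i) - a) = \sum_(i < n | i != k) (x i - a).
  by apply: eq_bigr => i /negbTE ->.
ring.
Qed.

Definition ymov (x : vec R n) i j d : vec R n := setc (setc x i (x i + d)) j (x j - d).

Lemma ymov_S (x : vec R n) i j d : i != j -> Ssum a (ymov x i j d) = Ssum a x.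
Proof.
move=> hij; rewrite /ymov !Ssum_setc /setc eq_sym (negbTE hij); ring.
Qed.

Lemma ymov_box (x : vec R n) i j d : in_box a b x -> a <= x i + d <= b -> a <= x j - d <= b ->
  in_box a b (ymov x i j d).
Proof.
move=> hx hi hj k; rewrite /ymov /setc.
case: eqVneq => _ //; case: eqVneq => _ //.
Qed.

Lemma ymov_fc (x : vec R n) i j d : i != j -> fr a b (x i) -> fr a b (x j) ->
  ~~ fr a b (x i + d) || ~~ fr a b (x j - d) -> (fc a b (ymov x i j d) < fc a b x)%N.
Proof.
move=> hij hi hj hnot; apply: proper_card; apply/properP; split.
  apply/subsetP => k; rewrite !inE /ymov /setc.
  case: eqVneq => [->|_] //; case: eqVneq => [->|_] //.
case/orP: hnot => hn.
  exists i; first by rewrite inE.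
  by rewrite inE /ymov /setc (negbTE hij) eqxx.
exists j; first by rewrite inE.
by rewrite inE /ymov /setc eqxx.
Qed.

Lemma theta_in_conv_aux N : forall (x : vec R n) t, (fc a b x <= N)%N -> in_box a b x ->
  phi (ustar a b (Ssum a x)) <= t -> t <= alpha -> conv (Salpha a b phi alpha) (x, t).
Proof.
elim: N => [|N IH] x t hN hx ht hta.
  apply: conv_sub; split => //=; rewrite hta andbT.
  by apply: le_trans (g_ge hab hphi hx _) ht; lia.
have [h1|h1] := leqP (fc a b x) 1.
  apply: conv_sub; split => //=; rewrite hta andbT.
  exact: le_trans (g_ge hab hphi hx h1) ht.
have [i [j [hi hj hij]]] := card_gt1P h1.
move: hi hj; rewrite !inE => hi hj.
have /andP[hai hib] := hi; have /andP[haj hjb] := hj.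
pose d1 := if b - x i <= x j - a then b - x i else x j - a.
pose d2 := if x i - a <= b - x j then x i - a else b - x j.
have hd1 : 0 < d1 by rewrite /d1; case: ifP => _; lra.
have hd2 : 0 < d2 by rewrite /d2; case: ifP => _; lra.
have hd1b : x i + d1 <= b /\ a <= x j - d1 by rewrite /d1; case: ifP => h; split; lra.
have hd2b : a <= x i - d2 /\ x j + d2 <= b by rewrite /d2; case: ifP => h; split; lra.
have hy1 : in_box a b (ymov x i j d1).
  by apply: ymov_box => //; apply/andP; split; lra.
have hy2 : in_box a b (ymov x i j (- d2)).
  by apply: ymov_box => //; apply/andP; split; lra.
have hc1 : conv (Salpha a b phi alpha) (ymov x i j d1, t).
  apply: IH => //; last by rewrite ymov_S.
  rewrite -ltnS; apply: leq_trans hN; apply: ymov_fc => //.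
  rewrite /fr /d1; case: ifP => h.
    by apply/orP; left; rewrite negb_and; apply/orP; right; rewrite -leNgt; lra.
  by apply/orP; right; rewrite negb_and; apply/orP; left; rewrite -leNgt; lra.
have hc2 : conv (Salpha a b phi alpha) (ymov x i j (- d2), t).
  apply: IH => //; last by rewrite ymov_S.
  rewrite -ltnS; apply: leq_trans hN; apply: ymov_fc => //.
  rewrite /fr /d2; case: ifP => h.
    by apply/orP; left; rewrite negb_and; apply/orP; left; rewrite -leNgt; lra.
  by apply/orP; right; rewrite negb_and; apply/orP; right; rewrite -leNgt; lra.
pose lam := d2 / (d1 + d2).
have hlam : 0 <= lam <= 1.
  rewrite /lam; apply/andP; split; first by apply: divr_ge0; lra.
  by rewrite ler_pdivrMr ?mul1r; lra.
have := conv_convex hc1 hc2 hlam.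
have hne : d1 + d2 != 0 by rewrite gt_eqF //; lra.
move=> H; apply: (eq_rect _ _ H); congr pair => /=; last by ring.
apply: functional_extensionality => k; rewrite /ymov /setc /lam.
case: eqVneq => [->|hkj]; first by field.
case: eqVneq => [->|hki]; first by field.
ring.
Qed.

Lemma part1 z : conv (Salpha a b phi alpha) z <-> conv (Theta a b phi alpha) z.
Proof.
split.
  apply: conv_mono => y [hy /andP[h1 h2]]; split => //.
  by rewrite h2 andbT (le_trans (g_le hab hphi hy) h1).
apply: conv_idem => y [hy /andP[h1 h2]].
rewrite [y]surjective_pairing; exact: (theta_in_conv_aux (leqnn _) hy h1 h2).
Qed.

End Part1.



Section Alg.
Variable R : realFieldType.

Lemma lim_lem (X Y K e0 : R) : 0 < e0 -> (forall e, 0 < e -> e < e0 -> X <= Y + e * K) -> X <= Y.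
Proof.
move=> he0 h; rewrite leNgt; apply/negP => hXY.
pose M := `|K| + 1.
have hM : 0 < M by rewrite /M ltr_pwDr.
pose e := Num.min (e0 / 2) ((X - Y) / (2 * M)).
have he : 0 < e by rewrite lt_min !divr_gt0 //; lra.
have he1 : e < e0 by rewrite /e gt_min; apply/orP; left; lra.
have hK : e * K <= e * M.
  by apply: ler_wpM2l; [exact: ltW | rewrite /M; have := ler_norm K; lra].
have he2 : e * M <= (X - Y) / 2.
  have : e <= (X - Y) / (2 * M) by rewrite /e ge_min lexx orbT.
  rewrite ler_pdivlMr ?mulr_gt0 // => h2.
  rewrite ler_pdivlMr //; lra.
have := h e he he1; lra.
Qed.

Lemma kink_alg (w t r e G0 Gm Gr Gt F H C : R) : 0 < w -> 0 < e -> e < t -> e < r ->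
  G0 <= F -> t * F <= (t - e) * Gm + e * H -> w * H <= e * C + (w - e) * Gt ->
  r * Gm <= e * Gr + (r - e) * G0 ->
  w * (t + r) * G0 <= w * t * Gr + w * r * Gt + e * (w * (G0 - Gr) + r * (C - Gt)).
Proof.
move=> hw he het her h1 h2 h3 h4.
have hA : (w * r * t) * G0 <= (w * r * t) * F by rewrite ler_wpM2l // !mulr_ge0 //; lra.
have hB : (w * r) * (t * F) <= (w * r) * ((t - e) * Gm + e * H) by rewrite ler_wpM2l // !mulr_ge0 //; lra.
have hC : (r * e) * (w * H) <= (r * e) * (e * C + (w - e) * Gt) by rewrite ler_wpM2l // !mulr_ge0 //; lra.
have hD : (w * (t - e)) * (r * Gm) <= (w * (t - e)) * (e * Gr + (r - e) * G0).
  by rewrite ler_wpM2l // !mulr_ge0 //; lra.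
rewrite -(ler_pM2l he); lra.
Qed.

Lemma glue_alg1 (r s q t gr gs gq gt : R) : s < q ->
  (q - r) * gs <= (q - s) * gr + (s - r) * gq ->
  (t - s) * gq <= (t - q) * gs + (q - s) * gt ->
  r <= s -> s <= t ->
  (t - r) * gs <= (t - s) * gr + (s - r) * gt.
Proof.
move=> hsq h1 h2 hrs hst.
have hA : (t - s) * ((q - r) * gs) <= (t - s) * ((q - s) * gr + (s - r) * gq) by rewrite ler_wpM2l //; lra.
have hB : (s - r) * ((t - s) * gq) <= (s - r) * ((t - q) * gs + (q - s) * gt) by rewrite ler_wpM2l //; lra.
have hc : 0 < q - s by lra.
rewrite -(ler_pM2l hc); lra.
Qed.

Lemma glue_alg2 (r q s t gr gq gs gt : R) : q < s ->
  (s - r) * gq <= (s - q) * gr + (q - r) * gs ->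
  (t - q) * gs <= (t - s) * gq + (s - q) * gt ->
  r <= q -> s <= t ->
  (t - r) * gs <= (t - s) * gr + (s - r) * gt.
Proof.
move=> hqs h1 h2 hrq hst.
have hA : (t - s) * ((s - r) * gq) <= (t - s) * ((s - q) * gr + (q - r) * gs) by rewrite ler_wpM2l //; lra.
have hB : (s - r) * ((t - q) * gs) <= (s - r) * ((t - s) * gq + (s - q) * gt) by rewrite ler_wpM2l //; lra.
have hc : 0 < s - q by lra.
rewrite -(ler_pM2l hc); lra.
Qed.

End Alg.



Section Part2.
Variables (R : realFieldType) (n : nat) (a b : R).
Hypothesis hab : a < b.
Variable phi : vec R n -> R.
Hypothesis hphi : schur_concave_on (in_box a b) phi.
Hypothesis hcc : componentwise_convex_on a b phi.

Local Notation w := (b - a).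
Let hw : 0 < w. Proof. by rewrite subr_gt0. Qed.

Definition g (s : R) : R := phi (ustar a b s).
Definition chord (r s t : R) : Prop := (t - r) * g s <= (t - s) * g r + (s - r) * g t.
Definition Qon (lo hi : R) : Prop := forall r s t, lo <= r -> r <= s -> s <= t -> t <= hi -> chord r s t.

Lemma setc_box (x : vec R n) i v : in_box a b x -> a <= v <= b -> in_box a b (setc x i v).
Proof. by move=> hx hv j; rewrite /setc; case: eqVneq. Qed.

Lemma piece k : (k < n)%N -> Qon (k%:R * w) (k.+1%:R * w).
Proof.
move=> hk r s t h1 h2 h3 h4.
have [hrt|hrt] := eqVneq r t.
  have hs : s = r by apply/eqP; rewrite eq_le h2 hrt h3.
  by rewrite /chord hs hrt !subrr !mul0r addr0.
have hrt' : 0 < t - r by rewrite subr_gt0 lt_neqAle hrt (le_trans h2 h3).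
pose ik := Ordinal hk.
pose l := (t - s) / (t - r).
have hl : 0 <= l <= 1.
  apply/andP; split; first by apply: divr_ge0; lra.
  by rewrite ler_pdivrMr // mul1r; lra.
have hbox : in_box a b ((wvec a b k r : vec R n)) by apply: (@wvec_box R n a b hab); apply/andP; split; lra.
have hwk : k%:R * w = w * k%:R by rewrite mulrC.
have hk1 : k.+1%:R * w = w * k%:R + w by rewrite -natr1; ring.
have hs1 : a <= a + r - w * k%:R <= b by apply/andP; split; lra.
have hs2 : a <= a + t - w * k%:R <= b by apply/andP; split; lra.
have := hcc ik hbox hs1 hs2 hl.
have E : forall v, setc ((wvec a b k r : vec R n)) ik (a + v - w * k%:R) = (wvec a b k v : vec R n).
  move=> v; apply: functional_extensionality => j; rewrite /setc /wvec.
  have -> : (j == ik) = ((j : nat) == k) by [].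
  case: eqVneq => [hj|hj]; first by rewrite hj ltnn.
  by [].
have -> : l * (a + r - w * k%:R) + (1 - l) * (a + t - w * k%:R) = a + s - w * k%:R.
  by rewrite /l; field; rewrite gt_eqF.
rewrite !E => H.
rewrite /chord /g !(@ustar_piece R n a b hab _ _ hk); try (apply/andP; split; lra).
have := ler_wpM2l (ltW hrt') H.
suff -> : (t - r) * (l * phi ((wvec a b k r : vec R n)) + (1 - l) * phi ((wvec a b k t : vec R n))) =
  (t - s) * phi ((wvec a b k r : vec R n)) + (s - r) * phi ((wvec a b k t : vec R n)) by [].
by rewrite /l; field; rewrite gt_eqF.
Qed.


Lemma kink k : (k.+1 < n)%N -> Qon 0 (k.+1%:R * w) ->
  forall r t, 0 <= r -> r < k.+1%:R * w -> k.+1%:R * w < t -> t <= k.+1%:R * w + w ->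
  chord r (k.+1%:R * w) t.
Proof.
move=> hk1 IH r t hr0 hrq hqt htw.
have hk : (k < n)%N by lia.
pose ik := Ordinal hk; pose ik1 := Ordinal hk1.
have hq1 : k.+1%:R * w = k%:R * w + w by rewrite -natr1; ring.
pose W0 := (wvec a b k (k.+1%:R * w) : vec R n).
pose V p q' := setc (setc W0 ik p) ik1 q'.
have hW0 : in_box a b W0 by apply: (@wvec_box R n a b hab); apply/andP; split; lra.
have hV : forall p q', a <= p <= b -> a <= q' <= b -> in_box a b (V p q').
  by move=> p q' hp hq'; apply: setc_box => //; apply: setc_box.
have hVS : forall p q', Ssum a (V p q') = k.+1%:R * w + (p - b) + (q' - a).
  move=> p q'; rewrite /V !(@Ssum_setc R n a) (@wvec_S R n a b) //.
  rewrite /setc /W0 /wvec.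
  have -> : (ik1 == ik) = false by rewrite /eq_op /=; lia.
  rewrite /= ltnn eqxx.
  have -> : (k.+1 < k)%N = false by lia.
  have -> : (k.+1 == k) = false by lia.
  rewrite hq1; ring.
have hVc1 : forall p q' v, setc (V p q') ik1 v = V p v.
  move=> p q' v; apply: functional_extensionality => j; rewrite /V /setc.
  by case: (j == ik1).
have hVc0 : forall p q' v, setc (V p q') ik v = V v q'.
  move=> p q' v; apply: functional_extensionality => j; rewrite /V /setc.
  have e1 : (j == ik) = ((j : nat) == k) by [].
  have e2 : (j == ik1) = ((j : nat) == k.+1) by [].
  rewrite e1 e2; case: eqVneq => h1 //; case: eqVneq => h2 //; exfalso; lia.
have hV4 : forall e, V (b - e) a = (wvec a b k (k.+1%:R * w - e) : vec R n).
  move=> e; apply: functional_extensionality => j; rewrite /V /setc /W0 /wvec.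
  have e1 : (j == ik) = ((j : nat) == k) by [].
  have e2 : (j == ik1) = ((j : nat) == k.+1) by [].
  rewrite e1 e2; repeat case: ifP => ?; try (exfalso; lia); rewrite ?hq1; ring.
have hV5 : forall tau, V b (a + tau) = (wvec a b k.+1 (k.+1%:R * w + tau) : vec R n).
  move=> tau; apply: functional_extensionality => j; rewrite /V /setc /W0 /wvec.
  have e1 : (j == ik) = ((j : nat) == k) by [].
  have e2 : (j == ik1) = ((j : nat) == k.+1) by [].
  rewrite e1 e2; repeat case: ifP => ?; try (exfalso; lia); rewrite ?hq1; ring.
set q := k.+1%:R * w in hrq hqt htw IH hVS hV4 hV5 *.
pose tau := t - q; pose rho := q - r.
pose C := phi (V a (a + tau)).
have htau : 0 < tau by rewrite /tau subr_gt0.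
have htauw : tau <= w by rewrite /tau; lra.
have hrho : 0 < rho by rewrite /rho subr_gt0.
have hgt : g t = phi (V b (a + tau)).
  rewrite hV5 /g /tau addrC subrK (@ustar_piece R n a b hab k.+1) //.
  have hq2 : k.+2%:R * w = q + w by rewrite /q -(natr1 k.+1); ring.
  by rewrite hq2; apply/andP; split; [change (q <= t)|]; lra.
have main : w * (tau + rho) * g q <= w * tau * g r + w * rho * g t.
  apply: (@lim_lem _ _ _ (w * (g q - g r) + rho * (C - g t)) (Num.min tau rho)).
    by rewrite lt_min htau hrho.
  move=> e he; rewrite lt_min => /andP[het her].
  have hew : e <= w by lra.
  have hgm : g (q - e) = phi (V (b - e) a).
    rewrite hV4 /g (@ustar_piece R n a b hab k) //.
    by apply/andP; split; rewrite /q; lra.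
  have E1 : g q <= phi (V (b - e) (a + e)).
    have := @g_le R n a b hab phi hphi (V (b - e) (a + e)).
    rewrite hVS.
    have -> : q + (b - e - b) + (a + e - a) = q by ring.
    apply; apply: hV; apply/andP; split; lra.
  have E2 : tau * phi (V (b - e) (a + e)) <= (tau - e) * g (q - e) + e * phi (V (b - e) (a + tau)).
    have hl : 0 <= (tau - e) / tau <= 1.
      apply/andP; split; first by apply: divr_ge0; lra.
      by rewrite ler_pdivrMr // mul1r; lra.
    have hs1 : a <= a <= b by rewrite lexx ltW.
    have hs2 : a <= a + tau <= b by apply/andP; split; lra.
    have hb : in_box a b (V (b - e) a) by apply: hV; apply/andP; split; lra.
    have := hcc ik1 hb hs1 hs2 hl.
    have -> : (tau - e) / tau * a + (1 - (tau - e) / tau) * (a + tau) = a + e.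
      by field; rewrite gt_eqF.
    rewrite !hVc1 hgm => H.
    have := ler_wpM2l (ltW htau) H.
    suff -> : tau * ((tau - e) / tau * phi (V (b - e) a) + (1 - (tau - e) / tau) * phi (V (b - e) (a + tau)))
      = (tau - e) * phi (V (b - e) a) + e * phi (V (b - e) (a + tau)) by [].
    by field; rewrite gt_eqF.
  have E3 : w * phi (V (b - e) (a + tau)) <= e * C + (w - e) * g t.
    have hl : 0 <= e / w <= 1.
      apply/andP; split; first by apply: divr_ge0; lra.
      by rewrite ler_pdivrMr // mul1r; lra.
    have hs1 : a <= a <= b by rewrite lexx ltW.
    have hs2 : a <= b <= b by rewrite lexx ltW.
    have hb : in_box a b (V (b - e) (a + tau)) by apply: hV; apply/andP; split; lra.
    have := hcc ik hb hs1 hs2 hl.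
    have -> : e / w * a + (1 - e / w) * b = b - e by field; rewrite gt_eqF.
    rewrite !hVc0 -hgt => H.
    have := ler_wpM2l (ltW hw) H.
    suff -> : w * (e / w * phi (V a (a + tau)) + (1 - e / w) * g t) = e * C + (w - e) * g t by [].
    by rewrite /C; field; rewrite gt_eqF.
  have E4 : rho * g (q - e) <= e * g r + (rho - e) * g q.
    have h1 : r <= q - e by rewrite /rho in her; lra.
    have h2 : q - e <= q by lra.
    have := IH r (q - e) q hr0 h1 h2 (lexx _).
    rewrite /chord /rho.
    have -> : q - (q - e) = e by ring.
    by have -> : q - e - r = q - r - e by ring.
  have := kink_alg hw he het her E1 E2 E3 E4.
  rewrite /C; lra.
rewrite /chord.
have -> : t - r = tau + rho by rewrite /tau /rho; ring.
rewrite -/tau -/rho -(ler_pM2l hw); lra.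
Qed.


Lemma glue p q v : Qon p q -> Qon q v ->
  (forall r t, p <= r -> r < q -> q < t -> t <= v -> chord r q t) -> Qon p v.
Proof.
move=> h1 h2 hk r s t hr hrs hst htv.
have [htq|htq] := lerP t q; first exact: h1.
have [hqr|hqr] := lerP q r; first exact: h2.
have [hsq|hsq|hsq] := ltgtP s q.
- apply: (glue_alg1 hsq) => //.
  + exact: h1 hr hrs (ltW hsq) (lexx _).
  + exact: hk (le_trans hr hrs) hsq htq htv.
- apply: (glue_alg2 hsq) => //; last exact: ltW.
  + exact: hk hr hqr hsq (le_trans hst htv).
  + exact: h2 (lexx _) (ltW hsq) hst htv.
- by rewrite hsq; apply: hk.
Qed.

Lemma Qall k : (k < n)%N -> Qon 0 (k.+1%:R * w).
Proof.
elim: k => [|k IH] hk.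
  by have := piece hk; rewrite mul0r.
have hk' : (k < n)%N by lia.
apply: glue (IH hk') (piece hk) _ => r t hr hrq hqt htv.
apply: kink => //; first exact: IH.
by move: htv; rewrite -(natr1 k.+1) mulrDl mul1r.
Qed.

Lemma chord_conv lo hi s1 s2 l : Qon lo hi -> lo <= s1 <= hi -> lo <= s2 <= hi -> 0 <= l <= 1 ->
  g (l * s1 + (1 - l) * s2) <= l * g s1 + (1 - l) * g s2.
Proof.
move=> hQ.
wlog: s1 s2 l / s1 <= s2.
  move=> H h1 h2 hl; have [h12|h12] := lerP s1 s2; first exact: H.
  have hl' : 0 <= 1 - l <= 1 by move: hl => /andP[? ?]; apply/andP; split; lra.
  have := H s2 s1 (1 - l) (ltW h12) h2 h1 hl'.
  have -> : (1 - l) * s2 + (1 - (1 - l)) * s1 = l * s1 + (1 - l) * s2 by ring.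
  by have -> : (1 - l) * g s2 + (1 - (1 - l)) * g s1 = l * g s1 + (1 - l) * g s2 by ring.
move=> h12 /andP[h1 h1'] /andP[h2 h2'] /andP[hl0 hl1].
have [he|hne] := eqVneq s1 s2.
  rewrite -he; have -> : l * s1 + (1 - l) * s1 = s1 by ring.
  by have -> : l * g s1 + (1 - l) * g s1 = g s1 by ring.
have hpos : 0 < s2 - s1 by rewrite subr_gt0 lt_neqAle hne h12.
have hs1 : s1 <= l * s1 + (1 - l) * s2 by nra.
have hs2 : l * s1 + (1 - l) * s2 <= s2 by nra.
have := hQ s1 _ s2 h1 hs1 hs2 h2'.
rewrite /chord => H.
rewrite -(ler_pM2l hpos).
have e1 : s2 - (l * s1 + (1 - l) * s2) = l * (s2 - s1) by ring.
have e2 : l * s1 + (1 - l) * s2 - s1 = (1 - l) * (s2 - s1) by ring.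
rewrite e1 e2 in H; lra.
Qed.

Lemma part2 alpha : convex_set (Theta a b phi alpha).
Proof.
move=> [x1 t1] [x2 t2] l [/= hx1 /andP[ht1 ht1a]] [/= hx2 /andP[ht2 ht2a]] /andP[hl0 hl1].
have hQ : Qon 0 (n%:R * w).
  have [hn0|hn] := eqVneq n 0%N.
    have hnw : n%:R * w = 0 by rewrite hn0 mul0r.
    move=> r s t h1 h2 h3 h4; rewrite hnw in h4.
    have hr : r = 0 by lra.
    have hs : s = 0 by lra.
    have ht : t = 0 by lra.
    by rewrite /chord hr hs ht !subrr !mul0r addr0.
  have hn' : (n.-1 < n)%N by lia.
  by have := Qall hn'; rewrite prednK //; lia.
have hS1 := @S_range R n a b x1 hx1.
have hS2 := @S_range R n a b x2 hx2.
have hSc : Ssum a (fun i => l * x1 i + (1 - l) * x2 i) = l * Ssum a x1 + (1 - l) * Ssum a x2.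
  rewrite /Ssum 2!mulr_sumr -big_split /=; apply: eq_bigr => i _; ring.
split => /=.
  move=> i; have /andP[? ?] := hx1 i; have /andP[? ?] := hx2 i; apply/andP; split; nra.
apply/andP; split; last by nra.
rewrite hSc; apply: le_trans (chord_conv hQ hS1 hS2 _) _; first by apply/andP; split.
rewrite /g; nra.
Qed.

End Part2.


Theorem mainTheorem14 (R : realFieldType) (n : nat) (a b : R) (hab : a < b)
  (phi : vec R n -> R) (hphi : schur_concave_on (in_box a b) phi) (alpha : R) :
  (forall z, conv (Salpha a b phi alpha) z <-> conv (Theta a b phi alpha) z) /\
  (componentwise_convex_on a b phi -> convex_set (Theta a b phi alpha)).
Proof.
split; first by move=> z; apply: part1.
by move=> hcc; apply: part2.
Qed.
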